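(* Suppose $h$ satisfies: there are $\alpha_h\in(0,2]$, $C_h\ge1$, $\theta_h\in(0,\infty]$ with $h(r)\le C_h\lambda^{\alpha_h}h(\lambda r)$ for all $\lambda\le1$, $r<\theta_h$. Let $\mathfrak h:(0,\infty)\to(0,\infty)$ be non-increasing with $\lambda^{\alpha_{\mathfrak h}}\mathfrak h(\lambda t)\le c_{\mathfrak h}\mathfrak h(t)$ for all $\lambda\le1$, $t<\theta_{\mathfrak h}$, for some $\alpha_{\mathfrak h}\le1$, $c_{\mathfrak h}\ge1$, $\theta_{\mathfrak h}\in(0,\infty]$. Then there is $c$ depending only on $d,\alpha_h,C_h,\alpha_{\mathfrak h},c_{\mathfrak h}$ such that for all $s,t>0$ with $s+t<(1/h(\theta_h))\wedge\theta_{\mathfrak h}$ and all $x,y\in\mathbb{R}^d$, $\mathfrak h(s)\rho_s(x)\wedge\mathfrak h(t)\rho_t(y)\le c\,\mathfrak h(s+t)\rho_{s+t}(x+y)$. In particular (taking $\mathfrak h\equiv1$), there is $c=c(d,\alpha_h,C_h)$ with $\rho_s(x)\wedge\rho_t(y)\le c\,\rho_{s+t}(x+y)$ for $s+t<1/h(\theta_h)$.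
   Context: Let $d\in\mathbb{N}$ and let $\nu:[0,\infty)\to[0,\infty]$ be non-increasing with $\int_{\mathbb{R}^d}(1\wedge|x|^2)\nu(|x|)\,dx<\infty$. For $r>0$ let $h(r)=\int_{\mathbb{R}^d}\big(1\wedge \tfrac{|x|^2}{r^2}\big)\nu(|x|)\,dx$ and $K(r)=r^{-2}\int_{|x|<r}|x|^2\nu(|x|)\,dx$; assume $h(0^+)=\infty$, so $h$ is a continuous strictly decreasing bijection of $(0,\infty)$ onto $(0,\infty)$ with inverse $h^{-1}$; $1/h(\infty):=\infty$. Bound function: $\rho_t(x)=[h^{-1}(1/t)]^{-d}\wedge \frac{tK(|x|)}{|x|^d}$ for $t>0$, $x\in\mathbb{R}^d$. *)

(* Defs.v *)
From Stdlib Require Import Reals Lra.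
Open Scope R_scope.

(* Points of R^d: functions nat -> R, only coordinates 0..d-1 matter. *)
Definition vec := nat -> R.
Definition vnorm (d : nat) (x : vec) : R :=
  sqrt (sum_f_R0 (fun i => x i ^ 2) (pred d)).
Definition vadd (x y : vec) : vec := fun i => x i + y i.

Fixpoint ball_vol (n : nat) : R :=
  match n with
  | O => 1
  | S O => 2
  | S (S m) => 2 * PI / INR (S (S m)) * ball_vol m
  end.
Definition sphere_area (d : nat) : R := INR d * ball_vol d.

Definition int_ab (g : R -> R) (a b I : R) : Prop :=
  exists pr : Riemann_integrable g a b, RiemannInt pr = I.

(* Improper integral over (0,oo) of a nonnegative function, equal to L (finite). *)
Definition IntOn0Inf (g : R -> R) (L : R) : Prop :=
  (forall a b, 0 < a -> a <= b -> exists I, int_ab g a b I) /\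
  is_lub (fun I => exists a b, 0 < a /\ a <= b /\ int_ab g a b I) L.

Definition IntOn0 (g : R -> R) (r L : R) : Prop :=
  (forall a, 0 < a -> a <= r -> exists I, int_ab g a r I) /\
  is_lub (fun I => exists a, 0 < a /\ a <= r /\ int_ab g a r I) L.

(* Extended positive reals (0,oo]: None = oo. *)
Definition ext_pos (th : option R) : Prop :=
  match th with None => True | Some a => 0 < a end.
Definition ext_lt (r : R) (th : option R) : Prop :=
  match th with None => True | Some a => r < a end.
(* 1/h(theta), with 1/h(oo) := oo *)
Definition inv_h_at (h : R -> R) (th : option R) : option R :=
  match th with None => None | Some a => Some (/ h a) end.

(* Standing assumptions: nu radial profile, h and K its functions
   (integrals over R^d written in polar coordinates), h(0+) = oo, hinv = h^{-1}. *)
Definition LevySetting (d : nat) (nu h K hinv : R -> R) : Prop :=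
  (1 <= d)%nat /\
  (forall r, 0 < r -> 0 <= nu r) /\
  (forall r1 r2, 0 < r1 -> r1 <= r2 -> nu r2 <= nu r1) /\
  (forall r, 0 < r ->
     IntOn0Inf (fun s => sphere_area d * Rmin 1 (s ^ 2 / r ^ 2) * nu s * s ^ (d - 1)) (h r)) /\
  (forall r, 0 < r ->
     IntOn0 (fun s => sphere_area d * s ^ 2 * nu s * s ^ (d - 1) / r ^ 2) r (K r)) /\
  (forall M, exists r, 0 < r /\ M < h r) /\
  (forall u, 0 < u -> 0 < hinv u /\ h (hinv u) = u).

(* rho_t(x) = [h^{-1}(1/t)]^{-d} /\ t K(|x|)/|x|^d  (= first term when x = 0) *)
Definition rho (d : nat) (K hinv : R -> R) (t : R) (x : vec) : R :=
  let r := vnorm d x in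
  let A := / (hinv (/ t)) ^ d in
  if Req_EM_T r 0 then A else Rmin A (t * K r / r ^ d).

Definition h_scaling (h : R -> R) (al C : R) (th : option R) : Prop :=
  forall lam r, 0 < lam -> lam <= 1 -> 0 < r -> ext_lt r th ->
    h r <= C * Rpower lam al * h (lam * r).

Definition frak_cond (f : R -> R) (al c : R) (th : option R) : Prop :=
  (forall t, 0 < t -> 0 < f t) /\
  (forall t1 t2, 0 < t1 -> t1 <= t2 -> f t2 <= f t1) /\
  (forall lam t, 0 < lam -> lam <= 1 -> 0 < t -> ext_lt t th ->
     Rpower lam al * f (lam * t) <= c * f t).

(* Main.v *)
Require Import Defs.
From Stdlib Require Import Reals Lra Lia.
From Coquelicot Require Import Coquelicot.
Open Scope R_scope.

Lemma int_to g a b I : int_ab g a b I -> ex_RInt g a b /\ RInt g a b = I.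
Proof. intros [pr <-]. split. apply ex_RInt_Reals_1; exact pr. apply RInt_Reals. Qed.

Lemma ball_vol_pos2 n : 0 < ball_vol n /\ 0 < ball_vol (S n).
Proof.
  induction n as [|n [IH1 IH2]]; [simpl; lra|].
  split; [exact IH2|].
  change (ball_vol (S (S n))) with (2 * PI / INR (S (S n)) * ball_vol n).
  apply Rmult_lt_0_compat; auto.
  unfold Rdiv; apply Rmult_lt_0_compat. generalize PI_RGT_0; lra.
  apply Rinv_0_lt_compat; apply lt_0_INR; lia.
Qed.

Lemma sphere_nonneg d : 0 <= sphere_area d.
Proof. unfold sphere_area. apply Rmult_le_pos. apply pos_INR. left; apply ball_vol_pos2. Qed.

Lemma h_mono d nu h K hinv r1 r2 : LevySetting d nu h K hinv -> 0 < r1 -> r1 <= r2 -> h r2 <= h r1.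
Proof.
  intros (Hd & Hnu0 & Hnum & Hh & HK & _ & _) H1 H12.
  destruct (Hh r2) as [_ [_ Hlub2]]; [lra|].
  apply Hlub2. intros I [a [b [Ha [Hab Hint]]]].
  destruct (Hh r1) as [Hex1 [Hub1 _]]; [lra|].
  destruct (Hex1 a b Ha Hab) as [I1 HI1].
  apply Rle_trans with I1; [| apply Hub1; exists a, b; auto].
  apply int_to in Hint; apply int_to in HI1.
  destruct Hint as [E2 <-]; destruct HI1 as [E1 <-].
  apply RInt_le; auto. intros x Hx.
  assert (Hm : Rmin 1 (x ^ 2 / r2 ^ 2) <= Rmin 1 (x ^ 2 / r1 ^ 2)).
  { assert (x ^ 2 / r2 ^ 2 <= x ^ 2 / r1 ^ 2).
    { unfold Rdiv. apply Rmult_le_compat_l. apply pow2_ge_0.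
      apply Rinv_le_contravar. apply pow_lt; lra. apply pow_incr; lra. }
    unfold Rmin; destruct Rle_dec; destruct Rle_dec; lra. }
  apply Rmult_le_compat_r. apply pow_le; lra.
  apply Rmult_le_compat_r. apply Hnu0; lra.
  apply Rmult_le_compat_l. apply sphere_nonneg. exact Hm.
Qed.

Lemma K_nonneg d nu h K hinv r : LevySetting d nu h K hinv -> 0 < r -> 0 <= K r.
Proof.
  intros (Hd & Hnu0 & Hnum & Hh & HK & _ & _) Hr.
  destruct (HK r Hr) as [Hex [Hub _]].
  destruct (Hex r Hr (Rle_refl r)) as [I HI].
  assert (I = 0). { apply int_to in HI. destruct HI as [_ <-]. rewrite RInt_point. reflexivity. }
  subst. apply Hub. exists r. split; auto. split; auto. apply Rle_refl.
Qed.


Lemma K2 d nu h K hinv r : LevySetting d nu h K hinv -> 0 < r -> K r <= 4 * K (2 * r).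
Proof.
  intros LS Hr. generalize LS. intros (Hd & Hnu0 & Hnum & Hh & HK & _ & _).
  destruct (HK r Hr) as [_ [_ Hlub]].
  destruct (HK (2 * r)) as [Hex2 [Hub2 _]]; [lra|].
  apply Hlub. intros I [a [Ha [Har Hint]]].
  destruct (Hex2 a Ha) as [J HJ]; [lra|].
  assert (J <= K (2 * r)) by (apply Hub2; exists a; repeat split; auto; lra).
  enough (I <= 4 * J) by lra.
  apply int_to in Hint; apply int_to in HJ.
  destruct Hint as [E1 <-]; destruct HJ as [E2 <-].
  set (g2 := fun s : R => sphere_area d * s ^ 2 * nu s * s ^ (d - 1) / (2 * r) ^ 2) in *.
  assert (Ea : ex_RInt g2 a r) by (apply (@ex_RInt_Chasles_1 R_CompleteNormedModule g2 a r (2*r)); [lra|auto]).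
  assert (Eb : ex_RInt g2 r (2*r)) by (apply (@ex_RInt_Chasles_2 R_CompleteNormedModule g2 a r (2*r)); [lra|auto]).
  idtac.
  assert (0 <= RInt g2 r (2*r)).
  { apply RInt_ge_0; [lra|auto|]. intros x Hx. unfold g2.
    unfold Rdiv. apply Rmult_le_pos; [|left; apply Rinv_0_lt_compat, pow_lt; lra].
    apply Rmult_le_pos; [|apply pow_le; lra].
    apply Rmult_le_pos; [|apply Hnu0; lra].
    apply Rmult_le_pos; [apply sphere_nonneg|apply pow2_ge_0]. }
  assert (Eq : RInt (fun s : R => sphere_area d * s ^ 2 * nu s * s ^ (d - 1) / r ^ 2) a r = 4 * RInt g2 a r).
  { pose proof (@RInt_scal R_CompleteNormedModule g2 a r 4 Ea) as Q.
    unfold scal in Q; simpl in Q; unfold mult in Q; simpl in Q.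
    rewrite <- Q. apply RInt_ext.
    intros x _. unfold g2, scal; simpl; unfold mult; simpl. field. lra. }
  rewrite Eq. rewrite <- (@RInt_Chasles R_CompleteNormedModule g2 a r (2*r) Ea Eb).
  unfold plus; simpl; unfold plus; simpl. lra.
Qed.

Lemma Kmono d nu h K hinv r1 r2 : LevySetting d nu h K hinv -> 0 < r1 -> r1 <= r2 ->
  K r2 * (r1 ^ d / r2 ^ d) <= K r1.
Proof.
  intros LS Hr1 H12. generalize LS. intros (Hd & Hnu0 & Hnum & Hh & HK & _ & _).
  assert (Hr2 : 0 < r2) by lra.
  assert (Hk : 0 < r1 ^ d / r2 ^ d) by (unfold Rdiv; apply Rmult_lt_0_compat; [apply pow_lt; lra| apply Rinv_0_lt_compat, pow_lt; lra]).
  destruct (HK r2 Hr2) as [_ [_ Hlub]].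
  destruct (HK r1 Hr1) as [Hex1 [Hub1 _]].
  assert (K r2 <= K r1 / (r1 ^ d / r2 ^ d)).
  2:{ apply (Rmult_le_compat_r (r1 ^ d / r2 ^ d)) in H; [|lra].
      unfold Rdiv at 2 in H. rewrite Rmult_assoc, Rinv_l in H; lra. }
  apply Hlub. intros I [a [Ha [Har Hint]]].
  assert (Hbex : exists b, a = r2 * b /\ 0 < b <= 1).
  { exists (a / r2). split. field; lra. split. apply Rdiv_lt_0_compat; lra.
    apply Rmult_le_reg_r with r2; [lra|]. unfold Rdiv; rewrite Rmult_assoc, Rinv_l; lra. }
  destruct Hbex as [b [-> Hb]].
  assert (Hrb1 : 0 < r1 * b) by (apply Rmult_lt_0_compat; lra).
  assert (Hrb2 : r1 * b <= r1) by (assert (r1*b <= r1*1) by (apply Rmult_le_compat_l; lra); lra).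
  destruct (Hex1 (r1 * b)) as [J HJ]; [lra|lra|].
  assert (J <= K r1) by (apply Hub1; exists (r1 * b); repeat split; auto).
  apply Rmult_le_reg_r with (r1 ^ d / r2 ^ d); auto.
  replace (K r1 / (r1 ^ d / r2 ^ d) * (r1 ^ d / r2 ^ d)) with (K r1) by (field; split; apply pow_nonzero; lra).
  apply Rle_trans with J; auto.
  apply int_to in Hint; apply int_to in HJ.
  destruct Hint as [E2 <-]; destruct HJ as [E1 <-].
  set (g1 := fun s : R => sphere_area d * s ^ 2 * nu s * s ^ (d - 1) / r1 ^ 2) in *.
  set (g2 := fun s : R => sphere_area d * s ^ 2 * nu s * s ^ (d - 1) / r2 ^ 2) in *.
  assert (E2' : ex_RInt g2 (r2 * b + 0) (r2 * 1 + 0)) by (rewrite Rplus_0_r, Rplus_0_r, Rmult_1_r; exact E2).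
  assert (E1' : ex_RInt g1 (r1 * b + 0) (r1 * 1 + 0)) by (rewrite Rplus_0_r, Rplus_0_r, Rmult_1_r; exact E1).
  replace (RInt g2 (r2 * b) r2) with (RInt g2 (r2 * b + 0) (r2 * 1 + 0)) by (rewrite Rplus_0_r, Rplus_0_r, Rmult_1_r; reflexivity).
  replace (RInt g1 (r1 * b) r1) with (RInt g1 (r1 * b + 0) (r1 * 1 + 0)) by (rewrite Rplus_0_r, Rplus_0_r, Rmult_1_r; reflexivity).
  clear E1 E2. rename E1' into E1. rename E2' into E2.
  rewrite <- (RInt_comp_lin g1 r1 0 b 1 E1).
  rewrite <- (RInt_comp_lin g2 r2 0 b 1 E2).
  pose proof (ex_RInt_comp_lin g1 r1 0 b 1 E1) as F1.
  pose proof (ex_RInt_comp_lin g2 r2 0 b 1 E2) as F2.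
  pose proof (RInt_scal _ b 1 (r1 ^ d / r2 ^ d) F2) as Q.
  unfold scal in Q, F1, F2 |- *; simpl in Q, F1, F2 |- *; unfold mult in Q, F1, F2 |- *; simpl in Q, F1, F2 |- *.
  rewrite Rmult_comm, <- Q.
  pose proof (ex_RInt_scal _ b 1 (r1 ^ d / r2 ^ d) F2) as F3.
  unfold scal in F3; simpl in F3; unfold mult in F3; simpl in F3.
  apply RInt_le; [lra| exact F3 | exact F1 |].
  intros y Hy. unfold g1, g2.
  rewrite !Rplus_0_r.
  destruct d as [|d']; [lia|]. simpl (S d' - 1)%nat.
  rewrite !Nat.sub_0_r, !Rpow_mult_distr.
  assert (Hn : nu (r2 * y) <= nu (r1 * y)) by (apply Hnum; [apply Rmult_lt_0_compat; lra| apply Rmult_le_compat_r; lra]).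
  assert (E: forall r, 0 < r -> r * (sphere_area (S d') * (r ^ 2 * y ^ 2) * nu (r * y) * (r ^ d' * y ^ d') / r ^ 2)
            = r ^ (S d') * (sphere_area (S d') * y ^ 2 * y ^ d') * nu (r * y)).
  { intros r Hr. simpl. field. lra. }
  rewrite !E by lra.
  assert (0 <= sphere_area (S d') * y ^ 2 * y ^ d').
  { apply Rmult_le_pos; [apply Rmult_le_pos; [apply sphere_nonneg|apply pow2_ge_0]|apply pow_le; lra]. }
  assert (Hp : r2 ^ S d' <> 0) by (apply pow_nonzero; lra).
  set (W := sphere_area (S d') * y ^ 2 * y ^ d') in *.
  replace (r1 ^ S d' / r2 ^ S d' * (r2 ^ S d' * W * nu (r2 * y)))
    with (r1 ^ S d' * W * nu (r2 * y)) by (field; exact Hp).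
  apply Rmult_le_compat_l; auto. apply Rmult_le_pos; auto. apply pow_le; lra.
Qed.


Lemma exp_le_mono x y : x <= y -> exp x <= exp y.
Proof. intros [H|H]; [left; apply exp_increasing; auto| subst; lra]. Qed.

Lemma Kbound d nu h K hinv rz q : LevySetting d nu h K hinv -> 0 < rz -> rz / 2 <= q ->
  K q / q ^ d <= 2 ^ (d + 2) * (K rz / rz ^ d).
Proof.
  intros LS Hz Hq.
  pose proof (Kmono d nu h K hinv (rz/2) q LS ltac:(lra) Hq) as M.
  pose proof (K2 d nu h K hinv (rz/2) LS ltac:(lra)) as M2.
  replace (2 * (rz / 2)) with rz in M2 by field.
  assert (Pp : 0 < (rz / 2) ^ d) by (apply pow_lt; lra).
  assert (Qp : 0 < q ^ d) by (apply pow_lt; lra).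
  assert (Zp : 0 < rz ^ d) by (apply pow_lt; lra).
  assert (Tp : 0 < 2 ^ d) by (apply pow_lt; lra).
  assert (E1 : K q / q ^ d = (K q * ((rz / 2) ^ d / q ^ d)) / (rz / 2) ^ d) by (field; lra).
  rewrite E1.
  apply Rle_trans with (4 * K rz / (rz / 2) ^ d).
  { unfold Rdiv at 1 3. apply Rmult_le_compat_r. left; apply Rinv_0_lt_compat; auto. lra. }
  right. unfold Rdiv. rewrite Rpow_mult_distr, pow_inv, pow_add. simpl. field. lra.
Qed.

Lemma vsum_le (x y : vec) n :
  sum_f_R0 (fun i => (x i + y i) ^ 2) n <= 2 * sum_f_R0 (fun i => x i ^ 2) n + 2 * sum_f_R0 (fun i => y i ^ 2) n.
Proof.
  assert (ab : forall a b, (a + b) ^ 2 <= 2 * a ^ 2 + 2 * b ^ 2)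
    by (intros a b; pose proof (pow2_ge_0 (a - b)); nra).
  induction n; [simpl; apply ab| rewrite !tech5; pose proof (ab (x (S n)) (y (S n))); lra].
Qed.

Lemma vsum_pos (x : vec) n : 0 <= sum_f_R0 (fun i => x i ^ 2) n.
Proof. induction n; [simpl; apply pow2_ge_0| rewrite tech5; pose proof (pow2_ge_0 (x (S n))); lra]. Qed.

Lemma vnorm_nonneg d x : 0 <= vnorm d x.
Proof. apply sqrt_pos. Qed.

Lemma vnorm_split d x y : vnorm d (vadd x y) / 2 <= vnorm d x \/ vnorm d (vadd x y) / 2 <= vnorm d y.
Proof.
  unfold vnorm, vadd.
  pose proof (vsum_le x y (pred d)). pose proof (vsum_pos x (pred d)). pose proof (vsum_pos y (pred d)).
  set (Sx := sum_f_R0 (fun i => x i ^ 2) (pred d)) in *.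
  set (Sy := sum_f_R0 (fun i => y i ^ 2) (pred d)) in *.
  set (Sz := sum_f_R0 (fun i => (x i + y i) ^ 2) (pred d)) in *.
  assert (0 <= Sz) by (unfold Sz; pose proof (vsum_pos (fun i => x i + y i) (pred d)); simpl in *; auto).
  pose proof (sqrt_sqrt Sx H0). pose proof (sqrt_sqrt Sy H1). pose proof (sqrt_sqrt Sz H2).
  pose proof (sqrt_pos Sx). pose proof (sqrt_pos Sy). pose proof (sqrt_pos Sz).
  destruct (Rle_dec (sqrt Sz / 2) (sqrt Sx)); auto.
  destruct (Rle_dec (sqrt Sz / 2) (sqrt Sy)); auto.
  exfalso. nra.
Qed.

Lemma rho_le_A d K hinv t x : rho d K hinv t x <= / hinv (/ t) ^ d.
Proof. unfold rho. destruct Req_EM_T. lra. apply Rmin_l. Qed.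

Lemma rho_le_B d K hinv t x : vnorm d x <> 0 -> rho d K hinv t x <= t * K (vnorm d x) / vnorm d x ^ d.
Proof. intros H. unfold rho. destruct Req_EM_T. contradiction. apply Rmin_r. Qed.

Lemma rho_ge d K hinv t z L k : 0 < k -> L <= k * / hinv (/ t) ^ d ->
  (vnorm d z <> 0 -> L <= k * (t * K (vnorm d z) / vnorm d z ^ d)) -> L <= k * rho d K hinv t z.
Proof.
  intros Hk H1 H2. unfold rho. destruct Req_EM_T; auto.
  unfold Rmin. destruct Rle_dec; auto.
Qed.

Lemma rpow_ge lam a : 0 < lam -> lam <= 1 -> a <= 1 -> lam <= Rpower lam a.
Proof.
  intros H0 H1 Ha. unfold Rpower.
  rewrite <- (exp_ln lam) at 1 by auto. apply exp_le_mono.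
  assert (ln lam <= 0) by (rewrite <- ln_1; apply ln_le; lra). nra.
Qed.

Lemma f_half f af cf thf u T : frak_cond f af cf thf -> af <= 1 -> 0 < u -> T / 2 <= u <= T -> ext_lt T thf ->
  f u <= 2 * cf * f T.
Proof.
  intros [Fp [Fm Fs]] Ha Hu HT Hth.
  assert (Hl : 0 < u / T <= 1).
  { split. apply Rdiv_lt_0_compat; lra. apply Rmult_le_reg_r with T; [lra|]. unfold Rdiv; rewrite Rmult_assoc, Rinv_l; lra. }
  pose proof (Fs (u / T) T (proj1 Hl) (proj2 Hl) ltac:(lra) Hth) as S.
  replace (u / T * T) with u in S by (field; lra).
  pose proof (rpow_ge (u / T) af (proj1 Hl) (proj2 Hl) Ha).
  assert (u / T >= / 2).
  { apply Rle_ge. apply Rmult_le_reg_r with T; [lra|]. unfold Rdiv; rewrite Rmult_assoc, Rinv_l; lra. }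
  pose proof (Fp u Hu). nra.
Qed.

Lemma f_scale f af cf thf s T : frak_cond f af cf thf -> af <= 1 -> 0 < s -> s <= T -> ext_lt T thf ->
  s * f s <= cf * (T * f T).
Proof.
  intros [Fp [Fm Fs]] Ha Hs HT Hth.
  assert (Hl : 0 < s / T <= 1).
  { split. apply Rdiv_lt_0_compat; lra. apply Rmult_le_reg_r with T; [lra|]. unfold Rdiv; rewrite Rmult_assoc, Rinv_l; lra. }
  pose proof (Fs (s / T) T (proj1 Hl) (proj2 Hl) ltac:(lra) Hth) as S.
  replace (s / T * T) with s in S by (field; lra).
  pose proof (rpow_ge (s / T) af (proj1 Hl) (proj2 Hl) Ha).
  pose proof (Fp s Hs).
  assert (s / T * f s <= cf * f T) by nra.
  replace (s * f s) with (T * (s / T * f s)) by (field; lra).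
  nra.
Qed.


Lemma A_half d nu h K hinv thh ah Ch u T :
  LevySetting d nu h K hinv -> ext_pos thh -> h_scaling h ah Ch thh -> 0 < ah -> 1 <= Ch ->
  0 < T -> ext_lt T (inv_h_at h thh) -> T / 2 <= u <= T ->
  / hinv (/ u) ^ d <= (/ exp (- ln (2 * Ch) / ah)) ^ d * / hinv (/ T) ^ d.
Proof.
  intros LS Hpos Hsc Ha HC HT Hth Hu.
  generalize LS; intros (_ & _ & _ & _ & _ & _ & Hinv).
  set (m := exp (- ln (2 * Ch) / ah)).
  assert (Hm : 0 < m) by apply exp_pos.
  destruct (Hinv (/ T)) as [Hr Er]; [apply Rinv_0_lt_compat; lra|].
  destruct (Hinv (/ u)) as [Hp Ep]; [apply Rinv_0_lt_compat; lra|].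
  set (r := hinv (/ T)) in *. set (p := hinv (/ u)) in *.
  assert (Hrth : ext_lt r thh).
  { destruct thh as [a|]; simpl in *; auto.
    destruct (Rlt_or_le r a) as [|Har]; auto. exfalso.
    pose proof (h_mono d nu h K hinv a r LS Hpos Har).
    assert (0 < h a).
    { destruct (Rlt_or_le 0 (h a)) as [|Hle]; auto. exfalso.
      destruct Hle as [Hlt|Heq].
      - pose proof (Rinv_lt_0_compat _ Hlt). lra.
      - rewrite Heq, Rinv_0 in Hth. lra. }
    assert (h a < / T).
    { rewrite <- (Rinv_inv (h a)). apply Rinv_lt_contravar; auto. apply Rmult_lt_0_compat; auto. apply Rinv_0_lt_compat; auto. }
    lra. }
  assert (Hmr : m * r <= p).
  { destruct (Rle_or_lt r p) as [Hrp|Hrp].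
    - assert (m <= 1).
      { unfold m. rewrite <- exp_0. apply exp_le_mono.
        assert (0 <= ln (2 * Ch)) by (rewrite <- ln_1; apply ln_le; lra).
        unfold Rdiv. assert (0 < / ah) by (apply Rinv_0_lt_compat; auto). nra. }
      nra.
    - set (lam := p / r).
      assert (Hl : 0 < lam < 1).
      { unfold lam; split. apply Rdiv_lt_0_compat; lra. apply Rmult_lt_reg_r with r; [lra|]. unfold Rdiv; rewrite Rmult_assoc, Rinv_l; lra. }
      pose proof (Hsc lam r (proj1 Hl) ltac:(lra) Hr Hrth) as S.
      replace (lam * r) with p in S by (unfold lam; field; lra).
      rewrite Er, Ep in S.
      assert (Hiu : / u <= 2 * / T).
      { replace (2 * / T) with (/ (T / 2)) by (field; lra). apply Rinv_le_contravar; lra. }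
      set (P := Rpower lam ah) in *.
      assert (HP : 0 < P) by (unfold P, Rpower; apply exp_pos).
      assert (H1 : 1 <= 2 * Ch * P).
      { assert (/ T <= Ch * P * (2 * / T)) by (apply Rle_trans with (Ch * P * / u); auto; apply Rmult_le_compat_l; nra).
        assert (0 < / T) by (apply Rinv_0_lt_compat; lra). nra. }
      assert (H2 : 0 <= ln (2 * Ch) + ln P).
      { rewrite <- ln_mult by lra. rewrite <- ln_1. apply ln_le; lra. }
      assert (H3 : ln P = ah * ln lam) by (unfold P, Rpower; apply ln_exp).
      assert (H4 : - ln (2 * Ch) / ah <= ln lam).
      { apply Rmult_le_reg_r with ah; auto. unfold Rdiv; rewrite Rmult_assoc, Rinv_l; lra. }
      assert (m <= lam) by (unfold m; rewrite <- (exp_ln lam) by lra; apply exp_le_mono; auto).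
      replace p with (lam * r) by (unfold lam; field; lra). nra. }
  assert (0 < m * r) by nra.
  apply Rle_trans with (/ (m * r) ^ d).
  - apply Rinv_le_contravar. apply pow_lt; auto. apply pow_incr; lra.
  - right. rewrite Rpow_mult_distr, pow_inv. field. split; apply pow_nonzero; lra.
Qed.


Lemma sideA d nu h K hinv thh ah Ch f af cf thf u T w :
  LevySetting d nu h K hinv -> ext_pos thh -> h_scaling h ah Ch thh -> 0 < ah -> 1 <= Ch ->
  frak_cond f af cf thf -> af <= 1 ->
  0 < u -> T / 2 <= u <= T -> ext_lt T (inv_h_at h thh) -> ext_lt T thf ->
  f u * rho d K hinv u w <= (2 * cf * (/ exp (- ln (2 * Ch) / ah)) ^ d) * f T * / hinv (/ T) ^ d.
Proof.
  intros LS Hp Hs Ha HC Hf Haf Hu HT Hth Htf.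
  pose proof (A_half d nu h K hinv thh ah Ch u T LS Hp Hs Ha HC ltac:(lra) Hth HT) as A1.
  pose proof (f_half f af cf thf u T Hf Haf Hu HT Htf) as F1.
  generalize LS; intros (_ & _ & _ & _ & _ & _ & Hinv).
  destruct (Hinv (/ T)) as [Hr _]; [apply Rinv_0_lt_compat; lra|].
  destruct (Hinv (/ u)) as [Hr' _]; [apply Rinv_0_lt_compat; lra|].
  assert (0 < / hinv (/ T) ^ d) by (apply Rinv_0_lt_compat, pow_lt; auto).
  assert (0 < / hinv (/ u) ^ d) by (apply Rinv_0_lt_compat, pow_lt; auto).
  destruct Hf as [Fp _].
  pose proof (Fp u Hu). pose proof (Fp T ltac:(lra)).
  set (M := (/ exp (- ln (2 * Ch) / ah)) ^ d) in *.
  assert (0 < M) by (unfold M; apply pow_lt, Rinv_0_lt_compat, exp_pos).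
  apply Rle_trans with (f u * / hinv (/ u) ^ d).
  { apply Rmult_le_compat_l; [lra|apply rho_le_A]. }
  apply Rle_trans with ((2 * cf * f T) * (M * / hinv (/ T) ^ d)).
  { apply Rmult_le_compat; lra. }
  right; ring.
Qed.

Lemma sideB d nu h K hinv f af cf thf s T w rz :
  LevySetting d nu h K hinv -> frak_cond f af cf thf -> af <= 1 ->
  0 < s -> s <= T -> ext_lt T thf -> 0 < rz -> rz / 2 <= vnorm d w ->
  f s * rho d K hinv s w <= (cf * 2 ^ (d + 2)) * f T * (T * K rz / rz ^ d).
Proof.
  intros LS Hf Haf Hs HT Htf Hz Hw.
  pose proof (f_scale f af cf thf s T Hf Haf Hs HT Htf) as F.
  pose proof (Kbound d nu h K hinv rz (vnorm d w) LS Hz Hw) as KB.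
  assert (Hq : 0 < vnorm d w) by lra.
  pose proof (K_nonneg d nu h K hinv (vnorm d w) LS Hq).
  pose proof (K_nonneg d nu h K hinv rz LS Hz).
  destruct Hf as [Fp _]. pose proof (Fp s Hs).
  assert (0 <= K (vnorm d w) / vnorm d w ^ d) by (unfold Rdiv; apply Rmult_le_pos; auto; left; apply Rinv_0_lt_compat, pow_lt; auto).
  apply Rle_trans with (f s * (s * K (vnorm d w) / vnorm d w ^ d)).
  { apply Rmult_le_compat_l; [lra|apply rho_le_B; lra]. }
  replace (f s * (s * K (vnorm d w) / vnorm d w ^ d)) with ((s * f s) * (K (vnorm d w) / vnorm d w ^ d)) by (unfold Rdiv; ring).
  apply Rle_trans with ((cf * (T * f T)) * (2 ^ (d + 2) * (K rz / rz ^ d))).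
  { apply Rmult_le_compat; auto. apply Rmult_le_pos; lra. }
  right; unfold Rdiv; ring.
Qed.

Lemma main_gen (d : nat) (ah Ch : R) :
    (1 <= d)%nat -> 0 < ah -> ah <= 2 -> 1 <= Ch ->
    (forall (af cf : R), af <= 1 -> 1 <= cf ->
      exists c : R, 0 < c /\
        forall (nu h K hinv : R -> R) (thh : option R) (f : R -> R) (thf : option R),
          LevySetting d nu h K hinv ->
          ext_pos thh -> h_scaling h ah Ch thh ->
          ext_pos thf -> frak_cond f af cf thf ->
          forall (s t : R) (x y : vec), 0 < s -> 0 < t ->
            ext_lt (s + t) (inv_h_at h thh) -> ext_lt (s + t) thf ->
            Rmin (f s * rho d K hinv s x) (f t * rho d K hinv t y)
              <= c * f (s + t) * rho d K hinv (s + t) (vadd x y)).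
Proof.
  intros Hd Ha Ha2 HC af cf Haf Hcf.
  set (C1 := 2 * cf * (/ exp (- ln (2 * Ch) / ah)) ^ d).
  set (C2 := cf * 2 ^ (d + 2)).
  assert (P1 : 0 < C1) by (unfold C1; apply Rmult_lt_0_compat; [lra| apply pow_lt, Rinv_0_lt_compat, exp_pos]).
  assert (P2 : 0 < C2) by (unfold C2; apply Rmult_lt_0_compat; [lra| apply pow_lt; lra]).
  exists (C1 + C2). split; [lra|].
  intros nu h K hinv thh f thf LS Hp Hs Hpf Hf s t x y Hs0 Ht0 Hth Htf.
  set (T := s + t) in *.
  assert (HfT : 0 < f T) by (apply Hf; unfold T; lra).
  generalize LS; intros (_ & _ & _ & _ & _ & _ & Hinv).
  destruct (Hinv (/ T)) as [Hr _]; [apply Rinv_0_lt_compat; unfold T; lra|].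
  assert (HA : 0 < / hinv (/ T) ^ d) by (apply Rinv_0_lt_compat, pow_lt; auto).
  apply rho_ge.
  - apply Rmult_lt_0_compat; lra.
  - apply Rle_trans with (C1 * f T * / hinv (/ T) ^ d).
    2:{ apply Rmult_le_compat_r; [lra|]. apply Rmult_le_compat_r; lra. }
    destruct (Rle_or_lt t s).
    + apply Rle_trans with (f s * rho d K hinv s x); [apply Rmin_l|].
      apply (sideA d nu h K hinv thh ah Ch f af cf thf s T x); auto; unfold T; lra.
    + apply Rle_trans with (f t * rho d K hinv t y); [apply Rmin_r|].
      apply (sideA d nu h K hinv thh ah Ch f af cf thf t T y); auto; unfold T; lra.
  - intros Hz.
    pose proof (vnorm_nonneg d (vadd x y)).
    assert (Hz' : 0 < vnorm d (vadd x y)) by lra.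
    pose proof (K_nonneg d nu h K hinv _ LS Hz').
    assert (0 <= T * K (vnorm d (vadd x y)) / vnorm d (vadd x y) ^ d).
    { unfold Rdiv. apply Rmult_le_pos. apply Rmult_le_pos; unfold T; lra. left; apply Rinv_0_lt_compat, pow_lt; auto. }
    apply Rle_trans with (C2 * f T * (T * K (vnorm d (vadd x y)) / vnorm d (vadd x y) ^ d)).
    2:{ apply Rmult_le_compat_r; [lra|]. apply Rmult_le_compat_r; lra. }
    destruct (vnorm_split d x y).
    + apply Rle_trans with (f s * rho d K hinv s x); [apply Rmin_l|].
      apply (sideB d nu h K hinv f af cf thf s T x); auto; unfold T; lra.
    + apply Rle_trans with (f t * rho d K hinv t y); [apply Rmin_r|].
      apply (sideB d nu h K hinv f af cf thf t T y); auto; unfold T; lra.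
Qed.

Theorem mainTheorem15 :
  forall (d : nat) (ah Ch : R),
    (1 <= d)%nat -> 0 < ah -> ah <= 2 -> 1 <= Ch ->
    (forall (af cf : R), af <= 1 -> 1 <= cf ->
      exists c : R, 0 < c /\
        forall (nu h K hinv : R -> R) (thh : option R) (f : R -> R) (thf : option R),
          LevySetting d nu h K hinv ->
          ext_pos thh -> h_scaling h ah Ch thh ->
          ext_pos thf -> frak_cond f af cf thf ->
          forall (s t : R) (x y : vec), 0 < s -> 0 < t ->
            ext_lt (s + t) (inv_h_at h thh) -> ext_lt (s + t) thf ->
            Rmin (f s * rho d K hinv s x) (f t * rho d K hinv t y)
              <= c * f (s + t) * rho d K hinv (s + t) (vadd x y))
    /\
    (exists c : R, 0 < c /\
        forall (nu h K hinv : R -> R) (thh : option R),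
          LevySetting d nu h K hinv ->
          ext_pos thh -> h_scaling h ah Ch thh ->
          forall (s t : R) (x y : vec), 0 < s -> 0 < t ->
            ext_lt (s + t) (inv_h_at h thh) ->
            Rmin (rho d K hinv s x) (rho d K hinv t y)
              <= c * rho d K hinv (s + t) (vadd x y)).
Proof.
  intros d ah Ch Hd Ha Ha2 HC. split.
  - apply main_gen; auto.
  - destruct (main_gen d ah Ch Hd Ha Ha2 HC 1 1 (Rle_refl 1) (Rle_refl 1)) as [c [Hc H]].
    exists c; split; auto.
    intros nu h K hinv thh LS Hp Hs s t x y Hs0 Ht0 Hth.
    assert (Hf : frak_cond (fun _ => 1) 1 1 None).
    { split; [intros; lra|]. split; [intros; lra|].
      intros lam t0 Hl Hl1 _ _. rewrite Rpower_1 by auto. lra. }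
    pose proof (H nu h K hinv thh (fun _ => 1) None LS Hp Hs I Hf s t x y Hs0 Ht0 Hth I) as R.
    simpl in R. rewrite !Rmult_1_l, Rmult_1_r in R. exact R.
Qed.
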